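(* Let $f\in C([0,1])$. Then for every $\varepsilon>0$ there exists a function $\phi$ generated by a $\sigma$-activated network with width $36$ and depth $5$ such that $|\phi(x)-f(x)|<\varepsilon$ for all $x\in[0,\tfrac{9}{10}]$.
   Context: Let $\sigma_1:\mathbb{R}\to\mathbb{R}$ be the continuous triangular-wave function of period $2$: $\sigma_1(x)=|x|$ for $x\in[-1,1]$, $\sigma_1(x+2)=\sigma_1(x)$. The activation is $\sigma(x)=\sigma_1(x)$ for $x\ge0$ and $\sigma(x)=x/(|x|+1)$ for $x<0$, applied entrywise. A function generated by a $\sigma$-activated network with one input, width $N$ and depth $L$ is a function of the form $\mathcal{L}_{\ell}\circ\sigma\circ\mathcal{L}_{\ell-1}\circ\cdots\circ\sigma\circ\mathcal{L}_0$ with $\ell\le L$ hidden layers, affine maps $\mathcal{L}_i$, $\mathcal{L}_0$ with domain $\mathbb{R}$, $\mathcal{L}_\ell$ with codomain $\mathbb{R}$, and at most $N$ neurons in each hidden layer. *)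

(* Defs.v *)
From Stdlib Require Import Reals List.
Open Scope R_scope.

(* Triangular wave of period 2: sigma1 x = |x| on [-1,1], sigma1 (x+2) = sigma1 x.
   Written as the distance from x to 2*floor((x+1)/2). *)
Definition sigma1 (x : R) : R :=
  Rabs (x - 2 * IZR (Int_part ((x + 1) / 2))).

Definition sigma (x : R) : R :=
  if Rle_dec 0 x then sigma1 x else x / (Rabs x + 1).

(* A hidden layer: output width, weights W j k (output j, input k), biases b j. *)
Record layer := mkLayer {
  lwidth : nat;
  lW : nat -> nat -> R;
  lb : nat -> R
}.

(* Affine map from R^m (vector v, first m coordinates used) given W, b. *)
Definition affine (m : nat) (W : nat -> nat -> R) (b : nat -> R)
  (v : nat -> R) : nat -> R :=
  fun j => b j + fold_right Rplus 0 (map (fun k => W j k * v k) (seq 0 m)).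

Fixpoint eval_hidden (ls : list layer) (m : nat) (v : nat -> R)
  : nat * (nat -> R) :=
  match ls with
  | nil => (m, v)
  | l :: ls' =>
      eval_hidden ls' (lwidth l)
        (fun j => sigma (affine m (lW l) (lb l) v j))
  end.

Definition net_eval (ls : list layer) (wout : nat -> R) (bout : R) (x : R) : R :=
  let '(m, v) := eval_hidden ls 1%nat (fun _ => x) in
  bout + fold_right Rplus 0 (map (fun k => wout k * v k) (seq 0 m)).

(* phi is generated by a sigma-activated network with one input, width N
   and depth L: at most L hidden layers, each with at most N neurons. *)
Definition generated_by_net (N L : nat) (phi : R -> R) : Prop :=
  exists (ls : list layer) (wout : nat -> R) (bout : R),
    (length ls <= L)%nat /\
    Forall (fun l => (lwidth l <= N)%nat) ls /\
    forall x, phi x = net_eval ls wout bout x.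

Definition continuous_on_01 (f : R -> R) : Prop :=
  forall x, 0 <= x <= 1 ->
    forall e, 0 < e -> exists d, 0 < d /\
      forall y, 0 <= y <= 1 -> Rabs (y - x) < d -> Rabs (f y - f x) < e.

(* Main.v *)
Require Import Defs.
From Stdlib Require Import Reals.
From Stdlib Require Import Lra Lia ZArith Znumtheory List.
Require Import Defs.
Open Scope R_scope.

Lemma TK : forall (k : Z) s, -1 <= s <= 1 -> sigma1 (2 * IZR k + s) = Rabs s.
Proof.
  intros k s Hs. unfold sigma1.
  destruct (Rlt_or_le s 1) as [H1|H1].
  - rewrite <- (Int_part_spec ((2 * IZR k + s + 1) / 2) k) by lra.
    f_equal; ring.
  - assert (s = 1) by lra; subst s.
    rewrite <- (Int_part_spec ((2 * IZR k + 1 + 1) / 2) (k+1)) by (rewrite plus_IZR; simpl; lra).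
    rewrite plus_IZR. simpl. replace (2 * IZR k + 1 - 2 * (IZR k + 1)) with (-1) by ring.
    rewrite Rabs_left by lra. rewrite Rabs_right by lra. ring.
Qed.

Lemma Trepr : forall z, exists k : Z, exists s, z = 2 * IZR k + s /\ -1 <= s < 1.
Proof.
  intros z. exists (Int_part ((z+1)/2)). exists (z - 2 * IZR (Int_part ((z+1)/2))).
  destruct (base_Int_part ((z+1)/2)). split; [ring|lra].
Qed.

Lemma T_bounds : forall z, 0 <= sigma1 z <= 1.
Proof.
  intros z. destruct (Trepr z) as [k [s [-> Hs]]]. rewrite TK by lra.
  unfold Rabs; destruct (Rcase_abs s); lra.
Qed.

Lemma sigma_pos : forall z, 0 <= z -> sigma z = sigma1 z.
Proof. intros z Hz. unfold sigma. destruct (Rle_dec 0 z); [reflexivity| lra]. Qed.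

Lemma sigma_neg : forall z, z < 0 -> sigma z = z / (Rabs z + 1).
Proof. intros z Hz. unfold sigma. destruct (Rle_dec 0 z); [lra| reflexivity]. Qed.

Lemma sigma_id : forall z, 0 <= z <= 1 -> sigma z = z.
Proof.
  intros z Hz. rewrite sigma_pos by lra.
  replace z with (2 * IZR 0 + z) at 1 by (simpl; ring). rewrite TK by lra.
  apply Rabs_right; lra.
Qed.

Lemma sigma_abs2 : forall z, -1 <= z <= 1 -> sigma (z + 2) = Rabs z.
Proof.
  intros z Hz. rewrite sigma_pos by lra.
  replace (z + 2) with (2 * IZR 1 + z) by (simpl; ring). apply TK; lra.
Qed.

Lemma sigma_range : forall z, -1 < sigma z <= 1.
Proof.
  intros z. destruct (Rle_dec 0 z).
  - rewrite sigma_pos by lra. pose proof (T_bounds z); lra.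
  - rewrite sigma_neg by lra. rewrite Rabs_left by lra.
    assert (0 < - z + 1) by lra.
    split.
    + apply (Rmult_lt_reg_r (-z+1)); auto. unfold Rdiv. rewrite Rmult_assoc, Rinv_l by lra. lra.
    + apply (Rmult_le_reg_r (-z+1)); auto. unfold Rdiv. rewrite Rmult_assoc, Rinv_l by lra. lra.
Qed.
Definition W1 (A : R) (j k : nat) : R :=
  match j, k with
  | 0%nat, 0%nat => 1
  | 1%nat, 0%nat => A
  | 2%nat, 0%nat => A
  | 3%nat, 0%nat => A
  | 4%nat, 0%nat => A
  | 5%nat, 0%nat => A
  | 6%nat, 0%nat => A
  | 7%nat, 0%nat => A
  | 8%nat, 0%nat => A
  | _, _ => 0
  end.
Definition b1  (j : nat) : R :=
  match j with
  | 0%nat => 0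
  | 1%nat => (5/2 - INR 0/2)
  | 2%nat => (5/2 - INR 1/2)
  | 3%nat => (5/2 - INR 2/2)
  | 4%nat => (5/2 - INR 3/2)
  | 5%nat => (2 - INR 0/2)
  | 6%nat => (2 - INR 1/2)
  | 7%nat => (2 - INR 2/2)
  | 8%nat => (2 - INR 3/2)
  | _ => 0
  end.
Definition W2 (A L : R) (j k : nat) : R :=
  match j, k with
  | 0%nat, 0%nat => (-2*A*L)
  | 0%nat, 1%nat => (2*L)
  | 1%nat, 5%nat => (-2)
  | 2%nat, 5%nat => 1
  | 3%nat, 0%nat => (-2*A*L)
  | 3%nat, 2%nat => (2*L)
  | 4%nat, 6%nat => (-2)
  | 5%nat, 6%nat => 1
  | 6%nat, 0%nat => (-2*A*L)
  | 6%nat, 3%nat => (2*L)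
  | 7%nat, 7%nat => (-2)
  | 8%nat, 7%nat => 1
  | 9%nat, 0%nat => (-2*A*L)
  | 9%nat, 4%nat => (2*L)
  | 10%nat, 8%nat => (-2)
  | 11%nat, 8%nat => 1
  | _, _ => 0
  end.
Definition b2 (L : R) (j : nat) : R :=
  match j with
  | 0%nat => (-2*L)
  | 1%nat => 3
  | 3%nat => (-2*L)
  | 4%nat => 3
  | 6%nat => (-2*L)
  | 7%nat => 3
  | 9%nat => (-2*L)
  | 10%nat => 3
  | _ => 0
  end.
Definition W3 (p : R) (j k : nat) : R :=
  match j, k with
  | 0%nat, 0%nat => (2*p)
  | 1%nat, 1%nat => (1/2)
  | 1%nat, 2%nat => (-1)
  | 2%nat, 3%nat => (2*p)
  | 3%nat, 4%nat => (1/2)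
  | 3%nat, 5%nat => (-1)
  | 4%nat, 6%nat => (2*p)
  | 5%nat, 7%nat => (1/2)
  | 5%nat, 8%nat => (-1)
  | 6%nat, 9%nat => (2*p)
  | 7%nat, 10%nat => (1/2)
  | 7%nat, 11%nat => (-1)
  | _, _ => 0
  end.
Definition b3 (p : R) (j : nat) : R :=
  match j with
  | 0%nat => (2*p)
  | 1%nat => (1/2)
  | 2%nat => (2*p)
  | 3%nat => (1/2)
  | 4%nat => (2*p)
  | 5%nat => (1/2)
  | 6%nat => (2*p)
  | 7%nat => (1/2)
  | _ => 0
  end.
Definition W4  (j k : nat) : R :=
  match j, k with
  | 0%nat, 0%nat => (1/2)
  | 0%nat, 1%nat => (-1)
  | 1%nat, 0%nat => (1/4)
  | 1%nat, 1%nat => (1/2)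
  | 2%nat, 2%nat => (1/2)
  | 2%nat, 3%nat => (-1)
  | 3%nat, 2%nat => (1/4)
  | 3%nat, 3%nat => (1/2)
  | 4%nat, 4%nat => (1/2)
  | 4%nat, 5%nat => (-1)
  | 5%nat, 4%nat => (1/4)
  | 5%nat, 5%nat => (1/2)
  | 6%nat, 6%nat => (1/2)
  | 6%nat, 7%nat => (-1)
  | 7%nat, 6%nat => (1/4)
  | 7%nat, 7%nat => (1/2)
  | _, _ => 0
  end.
Definition b4  (j : nat) : R :=
  match j with
  | 0%nat => 2
  | 2%nat => 2
  | 4%nat => 2
  | 6%nat => 2
  | _ => 0
  end.
Definition W5  (j k : nat) : R :=
  match j, k with
  | 0%nat, 0%nat => (-1/2)
  | 0%nat, 1%nat => 1
  | 0%nat, 2%nat => (-(-1/2))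
  | 0%nat, 3%nat => (-1)
  | 0%nat, 4%nat => (-1/2)
  | 0%nat, 5%nat => 1
  | 0%nat, 6%nat => (-(-1/2))
  | 0%nat, 7%nat => (-1)
  | 1%nat, 0%nat => (-1/2)
  | 1%nat, 1%nat => 1
  | 1%nat, 4%nat => (-1/2)
  | 1%nat, 5%nat => 1
  | 2%nat, 2%nat => (-1/2)
  | 2%nat, 3%nat => 1
  | 2%nat, 6%nat => (-1/2)
  | 2%nat, 7%nat => 1
  | _, _ => 0
  end.
Definition b5  (j : nat) : R :=
  match j with
  | 0%nat => 2
  | _ => 0
  end.

Definition aF A j x := sigma (A*x + (5/2 - INR j/2)).
Definition bF A j x := sigma (A*x + (2 - INR j/2)).
Definition rF A L j x := sigma (L*(2*aF A j x - 2 - 2*A*sigma x)).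
Definition eF A j x := sigma (3 - 2*bF A j x).
Definition pF A j x := sigma (bF A j x).
Definition CF A L p j x := sigma (2*p + 2*p*rF A L j x).
Definition HF A j x := sigma ((1 - 2*pF A j x + eF A j x)/2).
Definition DF A L p j x := sigma (CF A L p j x/2 - HF A j x + 2).
Definition GF A L p j x := sigma ((CF A L p j x/2 + HF A j x)/2).
Definition mF A L p j x := GF A L p j x - DF A L p j x / 2.
Definition mA A L p x := mF A L p 0 x + mF A L p 2 x.
Definition mB A L p x := mF A L p 1 x + mF A L p 3 x.
Definition outF A L p x :=
  (sigma (mA A L p x - mB A L p x + 2) + sigma (mA A L p x) + sigma (mB A L p x)) / 2.

Definition V1 A x (k : nat) : R :=
  match k with
  | 0%nat => sigma x
  | 1%nat => aF A 0 x | 2%nat => aF A 1 x | 3%nat => aF A 2 x | 4%nat => aF A 3 x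
  | 5%nat => bF A 0 x | 6%nat => bF A 1 x | 7%nat => bF A 2 x | 8%nat => bF A 3 x
  | _ => 0 end.
Definition V2 A L x (k : nat) : R :=
  match k with
  | 0%nat => rF A L 0 x | 1%nat => eF A 0 x | 2%nat => pF A 0 x
  | 3%nat => rF A L 1 x | 4%nat => eF A 1 x | 5%nat => pF A 1 x
  | 6%nat => rF A L 2 x | 7%nat => eF A 2 x | 8%nat => pF A 2 x
  | 9%nat => rF A L 3 x | 10%nat => eF A 3 x | 11%nat => pF A 3 x
  | _ => 0 end.
Definition V3 A L p x (k : nat) : R :=
  match k with
  | 0%nat => CF A L p 0 x | 1%nat => HF A 0 x
  | 2%nat => CF A L p 1 x | 3%nat => HF A 1 x
  | 4%nat => CF A L p 2 x | 5%nat => HF A 2 x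
  | 6%nat => CF A L p 3 x | 7%nat => HF A 3 x
  | _ => 0 end.
Definition V4 A L p x (k : nat) : R :=
  match k with
  | 0%nat => DF A L p 0 x | 1%nat => GF A L p 0 x
  | 2%nat => DF A L p 1 x | 3%nat => GF A L p 1 x
  | 4%nat => DF A L p 2 x | 5%nat => GF A L p 2 x
  | 6%nat => DF A L p 3 x | 7%nat => GF A L p 3 x
  | _ => 0 end.
Definition V5 A L p x (k : nat) : R :=
  match k with
  | 0%nat => sigma (mA A L p x - mB A L p x + 2)
  | 1%nat => sigma (mA A L p x)
  | 2%nat => sigma (mB A L p x)
  | _ => 0 end.

Definition netL A L p : list layer :=
  mkLayer 9 (W1 A) b1 :: mkLayer 12 (W2 A L) (b2 L) :: mkLayer 8 (W3 p) (b3 p)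
  :: mkLayer 8 W4 b4 :: mkLayer 3 W5 b5 :: nil.
Definition wout (B : R) (k : nat) : R := 2 * B.

Definition outv ls (wo : nat -> R) (bo : R) m v : R :=
  let '(m', v') := eval_hidden ls m v in
  bo + fold_right Rplus 0 (map (fun k => wo k * v' k) (seq 0 m')).

Lemma sum_ext : forall m s (F G : nat -> R),
  (forall k, (s <= k < s + m)%nat -> F k = G k) ->
  fold_right Rplus 0 (map F (seq s m)) = fold_right Rplus 0 (map G (seq s m)).
Proof.
  induction m; intros s F G H; simpl; auto.
  rewrite H by lia. f_equal. apply IHm. intros; apply H; lia.
Qed.

Lemma outv_ext : forall ls wo bo m v v', (forall k, (k < m)%nat -> v k = v' k) ->
  outv ls wo bo m v = outv ls wo bo m v'.
Proof.
  induction ls as [|l ls IH]; intros wo bo m v v' H.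
  - unfold outv; simpl. f_equal. apply sum_ext. intros k Hk. rewrite H by lia. reflexivity.
  - unfold outv; simpl. fold (outv ls wo bo (lwidth l) (fun j => sigma (affine m (lW l) (lb l) v j))).
    fold (outv ls wo bo (lwidth l) (fun j => sigma (affine m (lW l) (lb l) v' j))).
    apply IH. intros k Hk. f_equal. unfold affine. f_equal. apply sum_ext.
    intros i Hi. rewrite H by lia. reflexivity.
Qed.

Lemma outv_cons : forall l ls wo bo m v,
  outv (l :: ls) wo bo m v = outv ls wo bo (lwidth l) (fun j => sigma (affine m (lW l) (lb l) v j)).
Proof. reflexivity. Qed.

Ltac solve_layer :=
  let k := fresh "k" in let Hk := fresh "Hk" in
  intros k Hk;
  repeat (destruct k as [|k]; [ unfold affine;
     cbn [fold_right map seq W1 b1 V1 W2 b2 V2 W3 b3 V3 W4 b4 V4 W5 b5 V5];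
     unfold mA, mB, mF, DF, GF, CF, HF, rF, eF, pF, aF, bF;
     f_equal; cbn [INR]; field | ]); lia.

Lemma net_eval_eq : forall A L p B x,
  net_eval (netL A L p) (wout B) (-B) x = 4 * B * outF A L p x - B.
Proof.
  intros. change (net_eval (netL A L p) (wout B) (-B) x) with (outv (netL A L p) (wout B) (-B) 1 (fun _ => x)).
  unfold netL. rewrite outv_cons. cbn [lwidth lW lb].
  rewrite (outv_ext _ _ _ _ _ (V1 A x)) by solve_layer.
  rewrite outv_cons. cbn [lwidth lW lb].
  rewrite (outv_ext _ _ _ _ _ (V2 A L x)) by solve_layer.
  rewrite outv_cons. cbn [lwidth lW lb].
  rewrite (outv_ext _ _ _ _ _ (V3 A L p x)) by solve_layer.
  rewrite outv_cons. cbn [lwidth lW lb].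
  rewrite (outv_ext _ _ _ _ _ (V4 A L p x)) by solve_layer.
  rewrite outv_cons. cbn [lwidth lW lb].
  rewrite (outv_ext _ _ _ _ _ (V5 A L p x)) by solve_layer.
  unfold outv, outF, wout. cbn [eval_hidden fold_right map seq V5]. field.
Qed.

Lemma abs_le_bt : forall a b, Rabs a <= b -> -b <= a <= b.
Proof. intros a b H. unfold Rabs in H; destruct (Rcase_abs a); lra. Qed.
Lemma abs_lt_bt : forall a b, Rabs a < b -> -b < a < b.
Proof. intros a b H. unfold Rabs in H; destruct (Rcase_abs a); lra. Qed.

Lemma INR_j_le : forall j, (j <= 3)%nat -> 0 <= INR j <= 3.
Proof. intros j Hj. split. apply pos_INR. replace 3 with (INR 3) by (simpl; ring). apply le_INR; auto. Qed.

Section Fam.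
Variables (A L p x : R) (j : nat).
Hypothesis HA : 5 <= A.
Hypothesis HL : 1 <= L.
Hypothesis Hp : 0 <= p.
Hypothesis Hx : 0 <= x <= 9/10.
Hypothesis Hj : (j <= 3)%nat.

Lemma sx : sigma x = x.
Proof. apply sigma_id; lra. Qed.

Lemma b_range : 0 <= bF A j x <= 1.
Proof.
  pose proof (INR_j_le j Hj). unfold bF. rewrite sigma_pos.
  apply T_bounds. assert (0 <= A * x) by (apply Rmult_le_pos; lra). lra.
Qed.

Lemma H_val : HF A j x = Rmax 0 (1 - 2 * bF A j x).
Proof.
  pose proof b_range.
  unfold HF, eF, pF. rewrite (sigma_id (bF A j x)) by lra.
  replace (3 - 2 * bF A j x) with ((1 - 2 * bF A j x) + 2) by ring.
  rewrite sigma_abs2 by lra.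
  unfold Rmax, Rabs; destruct (Rle_dec 0 (1 - 2 * bF A j x)); destruct (Rcase_abs (1 - 2 * bF A j x));
   rewrite sigma_id; lra.
Qed.

Lemma H_range : 0 <= HF A j x <= 1.
Proof. rewrite H_val. pose proof b_range. unfold Rmax; destruct (Rle_dec 0 (1 - 2 * bF A j x)); lra. Qed.

Lemma C_range : 0 <= CF A L p j x <= 1.
Proof.
  unfold CF. pose proof (sigma_range (L * (2 * aF A j x - 2 - 2 * A * sigma x))).
  fold (rF A L j x) in H.
  rewrite sigma_pos. apply T_bounds.
  replace (2 * p + 2 * p * rF A L j x) with (2 * p * (1 + rF A L j x)) by ring.
  apply Rmult_le_pos; lra.
Qed.

Lemma m_val : mF A L p j x = Rmin (CF A L p j x / 2) (HF A j x).
Proof.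
  pose proof C_range. pose proof H_range.
  unfold mF, DF, GF. rewrite sigma_abs2 by lra. rewrite sigma_id by lra.
  unfold Rmin, Rabs; destruct (Rle_dec (CF A L p j x / 2) (HF A j x));
    destruct (Rcase_abs (CF A L p j x / 2 - HF A j x)); lra.
Qed.

Lemma m_range : 0 <= mF A L p j x <= 1/2.
Proof.
  rewrite m_val. pose proof C_range. pose proof H_range.
  unfold Rmin; destruct (Rle_dec (CF A L p j x / 2) (HF A j x)); lra.
Qed.

Lemma m_zero : ~ (0 < HF A j x) -> mF A L p j x = 0.
Proof.
  intros H. rewrite m_val. pose proof C_range. pose proof H_range.
  unfold Rmin; destruct (Rle_dec (CF A L p j x / 2) (HF A j x)); lra.
Qed.

Lemma H_flat : 0 < HF A j x -> exists k : nat, Rabs (A * x - (INR j / 2 + 2 * INR k)) < 1/2.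
Proof.
  intros Hpos. rewrite H_val in Hpos. pose proof (INR_j_le j Hj).
  assert (0 <= A * x) by (apply Rmult_le_pos; lra).
  unfold bF in Hpos. rewrite sigma_pos in Hpos by lra.
  destruct (Trepr (A * x + (2 - INR j / 2))) as [k' [s [Hz Hs]]].
  rewrite Hz, TK in Hpos by lra.
  assert (Habs : Rabs s < 1/2).
  { unfold Rmax in Hpos; destruct (Rle_dec 0 (1 - 2 * Rabs s)); lra. }
  assert (Hk : (0 < k')%Z).
  { apply lt_IZR. simpl. unfold Rabs in Habs; destruct (Rcase_abs s); lra. }
  exists (Z.to_nat (k' - 1)).
  rewrite (INR_IZR_INZ (Z.to_nat (k' - 1))), Z2Nat.id by lia. rewrite minus_IZR. simpl.
  replace (A * x - (INR j / 2 + 2 * (IZR k' - 1))) with s by lra. exact Habs.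
Qed.

Lemma H_big : forall k : nat, Rabs (A * x - (INR j / 2 + 2 * INR k)) <= 1/4 -> 1/2 <= HF A j x.
Proof.
  intros k Hk. rewrite H_val. pose proof (INR_j_le j Hj).
  assert (0 <= A * x) by (apply Rmult_le_pos; lra).
  unfold bF. rewrite sigma_pos by lra.
  replace (A * x + (2 - INR j / 2)) with (2 * IZR (Z.of_nat k + 1) + (A * x - (INR j / 2 + 2 * INR k)))
    by (rewrite plus_IZR, <- INR_IZR_INZ; simpl; ring).
  assert (Rabs (A * x - (INR j / 2 + 2 * INR k)) <= 1) by lra.
  rewrite TK by (apply abs_le_bt; lra).
  unfold Rmax; destruct (Rle_dec 0 (1 - 2 * Rabs (A * x - (INR j / 2 + 2 * INR k)))); lra.
Qed.

Lemma C_flat : forall k : nat, Rabs (A * x - (INR j / 2 + 2 * INR k)) < 1/2 ->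
  CF A L p j x = sigma1 (2 * p / (L * (INR (j + 4 * k) + 1) + 1)).
Proof.
  intros k Hk. pose proof (INR_j_le j Hj).
  assert (0 <= A * x) by (apply Rmult_le_pos; lra).
  set (s := A * x - (INR j / 2 + 2 * INR k)) in *.
  apply abs_lt_bt in Hk.
  assert (Ha : aF A j x = s + 1/2).
  { unfold aF. rewrite sigma_pos by lra.
    replace (A * x + (5 / 2 - INR j / 2)) with (2 * IZR (Z.of_nat k + 1) + (s + 1/2))
      by (unfold s; rewrite plus_IZR, <- INR_IZR_INZ; simpl; lra).
    rewrite TK by lra. apply Rabs_right; lra. }
  assert (HN : INR (j + 4 * k) = INR j + 4 * INR k) by (rewrite plus_INR, mult_INR; simpl; ring).
  assert (0 <= INR k) by apply pos_INR.
  assert (Hr : rF A L j x = - (L * (INR (j + 4 * k) + 1)) / (L * (INR (j + 4 * k) + 1) + 1)).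
  { unfold rF. rewrite Ha, sx.
    replace (L * (2 * (s + 1 / 2) - 2 - 2 * A * x)) with (- (L * (INR (j + 4 * k) + 1)))
      by (rewrite HN; unfold s; field).
    assert (0 < L * (INR (j + 4 * k) + 1)) by (rewrite HN; apply Rmult_lt_0_compat; lra).
    rewrite sigma_neg by lra. rewrite Rabs_Ropp, Rabs_right by lra. reflexivity. }
  unfold CF. rewrite Hr.
  assert (0 < L * (INR (j + 4 * k) + 1)) by (rewrite HN; apply Rmult_lt_0_compat; lra).
  replace (2 * p + 2 * p * (- (L * (INR (j + 4 * k) + 1)) / (L * (INR (j + 4 * k) + 1) + 1)))
    with (2 * p / (L * (INR (j + 4 * k) + 1) + 1)) by (field; lra).
  apply sigma_pos. apply Rmult_le_pos; [lra|]. apply Rlt_le, Rinv_0_lt_compat; lra.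
Qed.

End Fam.

Lemma approx : forall A L p x (g : nat -> R) Fx eta eta',
  5 <= A -> 1 <= L -> 0 <= p -> 0 <= x <= 9/10 -> 0 <= eta ->
  (forall n, INR n <= 2*A -> 0 <= g n /\ g n - eta <= sigma1 (2*p/(L*(INR n + 1)+1)) / 2 <= g n) ->
  (forall n, INR n <= 2*A -> Rabs (A*x - INR n/2) < 1/2 -> Rabs (g n - Fx) < eta') ->
  Rabs (outF A L p x - Fx) < eta + eta'.
Proof.
  intros A L p x g Fx eta eta' HA HL Hp Hx Heta Hg Hc.
  assert (HAx : 0 <= A * x <= 9/10 * A) by (split; [apply Rmult_le_pos|]; nra).
  assert (Hup : forall j, (j <= 3)%nat -> mF A L p j x = 0 \/
             (exists k : nat, Rabs (A * x - (INR j / 2 + 2 * INR k)) < 1/2) /\ mF A L p j x < Fx + eta').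
  { intros j Hj. destruct (Rlt_dec 0 (HF A j x)) as [Hpos|Hnp].
    - right. destruct (H_flat A x j HA Hx Hj Hpos) as [k Hk]. split; [exists k; exact Hk|].
      pose proof (INR_j_le j Hj).
      assert (HN : INR (j + 4 * k) = INR j + 4 * INR k) by (rewrite plus_INR, mult_INR; simpl; ring).
      assert (Hn : INR (j + 4 * k) <= 2 * A).
      { rewrite HN. apply abs_lt_bt in Hk. lra. }
      destruct (Hg _ Hn) as [_ [_ Hg2]].
      assert (Hc' : Rabs (g (j + 4 * k)%nat - Fx) < eta').
      { apply Hc; auto. rewrite HN. replace (A * x - (INR j + 4 * INR k) / 2) with (A * x - (INR j / 2 + 2 * INR k)) by field. exact Hk. }
      apply abs_lt_bt in Hc'.
      rewrite (m_val A L p x j HA Hp Hx Hj), (C_flat A L p x j HA HL Hp Hx Hj k Hk) in *.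
      unfold Rmin. destruct (Rle_dec _ _); lra.
    - left. apply m_zero; auto. }
  assert (Hlow : exists j, (j <= 3)%nat /\ Fx - eta - eta' < mF A L p j x /\ - eta' < Fx).
  { set (z := Int_part (2 * (A * x) + 1/2)).
    destruct (base_Int_part (2 * (A * x) + 1/2)) as [Hz1 Hz2]. fold z in Hz1, Hz2.
    assert (Hz0 : (0 <= z)%Z) by (assert (-1 < z)%Z by (apply lt_IZR; simpl; lra); lia).
    set (n0 := Z.to_nat z).
    assert (Hn0 : INR n0 = IZR z) by (unfold n0; rewrite INR_IZR_INZ, Z2Nat.id; auto).
    set (j0 := (n0 mod 4)%nat). set (k0 := (n0 / 4)%nat).
    assert (Hj0 : (j0 <= 3)%nat) by (unfold j0; pose proof (Nat.mod_upper_bound n0 4); lia).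
    assert (Hdec : n0 = (j0 + 4 * k0)%nat) by (unfold j0, k0; pose proof (Nat.div_mod_eq n0 4); lia).
    assert (HN : INR n0 = INR j0 + 4 * INR k0) by (rewrite Hdec at 1; rewrite plus_INR, mult_INR; simpl; ring).
    assert (Hk : Rabs (A * x - (INR j0 / 2 + 2 * INR k0)) <= 1/4).
    { apply Rabs_le. lra. }
    assert (Hk' : Rabs (A * x - (INR j0 / 2 + 2 * INR k0)) < 1/2) by lra.
    pose proof (H_big A x j0 HA Hx Hj0 k0 Hk) as HH.
    assert (Hn : INR n0 <= 2 * A) by lra.
    destruct (Hg _ Hn) as [Hg0 [Hg1 Hg2]].
    assert (Hc' : Rabs (g n0 - Fx) < eta').
    { apply Hc; auto. apply Rabs_def1; lra. }
    apply abs_lt_bt in Hc'.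
    exists j0. split; auto.
    rewrite (m_val A L p x j0 HA Hp Hx Hj0), (C_flat A L p x j0 HA HL Hp Hx Hj0 k0 Hk').
    rewrite <- Hdec.
    pose proof (T_bounds (2 * p / (L * (INR n0 + 1) + 1))).
    unfold Rmin. destruct (Rle_dec _ _); lra. }
  assert (Hdisj : forall j1 j2, (j1 <= 3)%nat -> (j2 <= 3)%nat -> j2 = (j1 + 2)%nat ->
     mF A L p j1 x = 0 \/ mF A L p j2 x = 0).
  { intros j1 j2 Hj1 Hj2 Heq.
    destruct (Hup j1 Hj1) as [H1|[[k1 Hk1] _]]; [left; auto|].
    destruct (Hup j2 Hj2) as [H2|[[k2 Hk2] _]]; [right; auto|].
    exfalso. subst j2. rewrite plus_INR in Hk2. simpl in Hk2.
    apply abs_lt_bt in Hk1. apply abs_lt_bt in Hk2.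
    assert (Hd : -1 < IZR (2 * (Z.of_nat k1 - Z.of_nat k2) - 1) < 1).
    { rewrite minus_IZR, mult_IZR, minus_IZR, <- !INR_IZR_INZ. simpl. lra. }
    destruct Hd as [Hd1 Hd2]. apply lt_IZR in Hd1. apply lt_IZR in Hd2. lia. }
  pose proof (m_range A L p x 0 HA Hp Hx ltac:(lia)) as R0.
  pose proof (m_range A L p x 1 HA Hp Hx ltac:(lia)) as R1.
  pose proof (m_range A L p x 2 HA Hp Hx ltac:(lia)) as R2.
  pose proof (m_range A L p x 3 HA Hp Hx ltac:(lia)) as R3.
  destruct Hlow as [j0 [Hj0 [Hlo Hfx]]].
  assert (UA : mA A L p x < Fx + eta').
  { unfold mA. destruct (Hdisj 0%nat 2%nat ltac:(lia) ltac:(lia) eq_refl) as [E|E];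
    [ destruct (Hup 2%nat ltac:(lia)) as [E'|[_ E']] | destruct (Hup 0%nat ltac:(lia)) as [E'|[_ E']] ]; lra. }
  assert (UB : mB A L p x < Fx + eta').
  { unfold mB. destruct (Hdisj 1%nat 3%nat ltac:(lia) ltac:(lia) eq_refl) as [E|E];
    [ destruct (Hup 3%nat ltac:(lia)) as [E'|[_ E']] | destruct (Hup 1%nat ltac:(lia)) as [E'|[_ E']] ]; lra. }
  assert (LO : Fx - eta - eta' < mA A L p x \/ Fx - eta - eta' < mB A L p x).
  { unfold mA, mB. destruct j0 as [|[|[|[|]]]]; [left|right|left|right|lia]; lra. }
  assert (RA : 0 <= mA A L p x <= 1) by (unfold mA; lra).
  assert (RB : 0 <= mB A L p x <= 1) by (unfold mB; lra).
  unfold outF. rewrite sigma_abs2 by lra. rewrite !sigma_id by lra.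
  apply Rabs_def1; unfold Rabs; destruct (Rcase_abs (mA A L p x - mB A L p x)); destruct LO; lra.
Qed.

Lemma T_cong : forall (pz r q m : Z), (0 < q)%Z -> (pz - r = m * q)%Z ->
  0 <= 2 * IZR r / IZR q <= 1 -> sigma1 (2 * IZR pz / IZR q) = 2 * IZR r / IZR q.
Proof.
  intros pz r q m Hq Hm Hr.
  assert (Hq' : 0 < IZR q) by (apply IZR_lt; auto).
  assert (Hpz : IZR pz = IZR r + IZR m * IZR q) by (rewrite <- mult_IZR, <- plus_IZR; f_equal; lia).
  replace (2 * IZR pz / IZR q) with (2 * IZR m + 2 * IZR r / IZR q) by (rewrite Hpz; field; lra).
  rewrite TK by lra. apply Rabs_right; lra.
Qed.

Lemma godel_coprime : forall (Lz N n m : Z), (0 <= n <= N)%Z -> (0 <= m <= N)%Z -> n <> m ->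
  (forall d, (1 <= d <= N)%Z -> (d | Lz)%Z) ->
  rel_prime (1 + (n + 1) * Lz) (1 + (m + 1) * Lz).
Proof.
  intros Lz N n m Hn Hm Hnm HL.
  constructor; try apply Z.divide_1_l.
  intros x Ha Hb.
  assert (H1 : (x | m - n)%Z).
  { replace (m - n)%Z with ((m + 1) * (1 + (n + 1) * Lz) - (n + 1) * (1 + (m + 1) * Lz))%Z by ring.
    apply Z.divide_sub_r; apply Z.divide_mul_r; auto. }
  assert (H2 : (m - n | Lz)%Z).
  { apply Z.divide_abs_l. apply HL. lia. }
  assert (H3 : (x | Lz)%Z) by (eapply Z.divide_trans; eauto).
  replace 1%Z with ((1 + (n + 1) * Lz) - (n + 1) * Lz)%Z by ring.
  apply Z.divide_sub_r; auto. apply Z.divide_mul_r; auto.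
Qed.

Lemma crt : forall (q rho : nat -> Z) (N : nat),
  (forall n, (0 < q n)%Z) ->
  (forall n m, (n <= N)%nat -> (m <= N)%nat -> n <> m -> rel_prime (q n) (q m)) ->
  exists pz, (0 <= pz)%Z /\ forall n, (n <= N)%nat -> (q n | pz - rho n)%Z.
Proof.
  intros q rho N Hq Hcop.
  assert (Claim : forall N', (N' <= N)%nat -> exists pz P, (0 <= pz)%Z /\ (0 < P)%Z /\
     (forall n, (n <= N')%nat -> (q n | P)%Z) /\
     (forall n, (n <= N')%nat -> (q n | pz - rho n)%Z) /\
     (forall m, (N' < m <= N)%nat -> rel_prime P (q m))).
  { induction N' as [|N' IH]; intros HN'.
    - exists (rho 0%nat + Z.abs (rho 0%nat) * q 0%nat)%Z, (q 0%nat).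
      pose proof (Hq 0%nat).
      split; [nia|]. split; [auto|]. split.
      + intros n Hn. replace n with 0%nat by lia. apply Z.divide_refl.
      + split.
        * intros n Hn. replace n with 0%nat by lia. exists (Z.abs (rho 0%nat)). ring.
        * intros m Hm. apply Hcop; lia.
    - destruct (IH ltac:(lia)) as [pz [P [Hpz [HP [HdP [Hd Hrel]]]]]].
      set (qq := q (S N')). set (r := rho (S N')).
      destruct (rel_prime_bezout P qq (Hrel (S N') ltac:(lia))) as [u v Huv].
      set (pz1 := (pz + P * u * (r - pz))%Z).
      exists (pz1 + Z.abs pz1 * P * qq)%Z, (P * qq)%Z.
      assert (Hqq : (0 < qq)%Z) by apply Hq.
      assert (HPq : (1 <= P * qq)%Z) by nia.
      assert (Hab : (0 <= Z.abs pz1 * (P * qq - 1))%Z) by (apply Z.mul_nonneg_nonneg; lia).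
      split; [rewrite <- Z.mul_assoc; nia|]. split; [nia|]. split; [|split].
      + intros n Hn. destruct (Nat.eq_dec n (S N')) as [->|Hne].
        * apply Z.divide_mul_r. apply Z.divide_refl.
        * apply Z.divide_mul_l. apply HdP. lia.
      + intros n Hn. destruct (Nat.eq_dec n (S N')) as [->|Hne].
        * fold qq r. exists ((pz - r) * v + Z.abs pz1 * P)%Z. unfold pz1.
          replace (P * u)%Z with (1 - v * qq)%Z by lia. ring.
        * destruct (Hd n ltac:(lia)) as [c Hc]. destruct (HdP n ltac:(lia)) as [c' Hc'].
          exists (c + c' * (u * (r - pz) + Z.abs pz1 * qq))%Z.
          assert (E : pz1 = (pz + P * u * (r - pz))%Z) by reflexivity.
          clearbody pz1 qq r. rewrite E.
          assert (E2 : pz = (rho n + c * q n)%Z) by lia.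
          rewrite Hc'. rewrite E2. ring.
      + intros m Hm. apply rel_prime_sym. apply rel_prime_mult.
        * apply rel_prime_sym. apply Hrel. lia.
        * apply Hcop; lia. }
  destruct (Claim N (le_n N)) as [pz [P [Hpz [_ [_ [Hd _]]]]]].
  exists pz. split; auto.
Qed.

Definition clamp (x : R) := Rmax 0 (Rmin 1 x).

Lemma clamp_range : forall x, 0 <= clamp x <= 1.
Proof. intros x. unfold clamp, Rmax, Rmin. repeat destruct (Rle_dec _ _); lra. Qed.

Lemma clamp_id : forall x, 0 <= x <= 1 -> clamp x = x.
Proof. intros x Hx. unfold clamp, Rmax, Rmin. repeat destruct (Rle_dec _ _); lra. Qed.

Lemma clamp_lip : forall x y, Rabs (clamp x - clamp y) <= Rabs (x - y).
Proof.
  intros x y. unfold clamp, Rmax, Rmin.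
  repeat destruct (Rle_dec _ _); unfold Rabs; repeat destruct (Rcase_abs _); lra.
Qed.

Lemma UC : forall f, continuous_on_01 f -> forall e, 0 < e -> exists d, 0 < d /\
  forall x y, 0 <= x <= 1 -> 0 <= y <= 1 -> Rabs (x - y) < d -> Rabs (f x - f y) < e.
Proof.
  intros f Hf e He.
  set (g := fun x => f (clamp x)).
  assert (Hc : forall x, (fun c => 0 <= c <= 1) x -> continuity_pt g x).
  { intros x0 _. unfold continuity_pt, continue_in, limit1_in, limit_in.
    intros eps Heps. destruct (Hf (clamp x0) (clamp_range x0) eps Heps) as [d [Hd H]].
    exists d. split; auto. intros x [_ Hx]. simpl in *. unfold R_dist in *.
    unfold g. apply H. apply clamp_range. eapply Rle_lt_trans; [apply clamp_lip|]. auto. }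
  destruct (Heine g _ (compact_P3 0 1) Hc (mkposreal e He)) as [d Hd].
  exists d. split; [apply cond_pos|]. intros x y Hx Hy Hxy.
  pose proof (Hd x y Hx Hy Hxy) as H. unfold g in H. rewrite !clamp_id in H by auto. exact H.
Qed.

Lemma bound_fin : forall (h : nat -> R) N, exists B, 0 < B /\ forall n, (n <= N)%nat -> Rabs (h n) <= B.
Proof.
  intros h N. induction N as [|N [B [HB H]]].
  - exists (Rabs (h 0%nat) + 1). split. pose proof (Rabs_pos (h 0%nat)); lra.
    intros n Hn. replace n with 0%nat by lia. lra.
  - exists (B + Rabs (h (S N))). split. pose proof (Rabs_pos (h (S N))); lra.
    intros n Hn. destruct (Nat.eq_dec n (S N)) as [->|Hne]. lra.
    pose proof (H n ltac:(lia)). pose proof (Rabs_pos (h (S N))). lra.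
Qed.

Lemma fact_div : forall M d, (1 <= d <= Z.of_nat M)%Z -> (d | Z.of_nat (fact M))%Z.
Proof.
  induction M; intros d Hd.
  - simpl in Hd. lia.
  - change (fact (S M)) with (S M * fact M)%nat. rewrite Nat2Z.inj_mul.
    destruct (Z.eq_dec d (Z.of_nat (S M))) as [->|Hne].
    + apply Z.divide_mul_l. apply Z.divide_refl.
    + apply Z.divide_mul_r. apply IHM. lia.
Qed.

Lemma fact_ge : forall M, (M <= fact M)%nat.
Proof.
  induction M. simpl; lia. change (fact (S M)) with (S M * fact M)%nat.
  pose proof (lt_O_fact M). nia.
Qed.

Theorem theorem15 :
  forall f : R -> R,
    continuous_on_01 f ->
    forall eps, 0 < eps ->
    exists phi : R -> R,
      generated_by_net 36 5 phi /\
      forall x, 0 <= x <= 9/10 -> Rabs (phi x - f x) < eps.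
Proof.
  intros f Hf eps Heps.
  destruct (UC f Hf (eps/2) ltac:(lra)) as [d [Hd Hu]].
  destruct (archimed (1/d)) as [Hup1 _].
  assert (Hupd : 0 < 1/d) by (apply Rdiv_lt_0_compat; lra).
  set (Na := (Z.to_nat (up (1/d)) + 5)%nat).
  set (A := INR Na).
  assert (HA : 1/d + 5 < A).
  { unfold A, Na. rewrite plus_INR, (INR_IZR_INZ (Z.to_nat (up (1/d)))), Z2Nat.id.
    simpl. lra. apply le_IZR. lra. }
  assert (HA5 : 5 <= A) by lra.
  destruct (bound_fin (fun n => f (INR n / (2 * A))) (2 * Na)) as [B [HB HBb]].
  destruct (archimed (8 * B / eps)) as [Hup2 _].
  set (M := (2 * Na + Z.to_nat (up (8 * B / eps)))%nat).
  set (Lz := Z.of_nat (fact M)).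
  set (L := IZR Lz).
  assert (HLM : INR M <= L).
  { unfold L, Lz. rewrite <- INR_IZR_INZ. apply le_INR, fact_ge. }
  assert (HML : 8 * B / eps < INR M).
  { unfold M. rewrite plus_INR, (INR_IZR_INZ (Z.to_nat (up (8 * B / eps)))), Z2Nat.id. pose proof (pos_INR (2 * Na)). lra.
    apply le_IZR. assert (0 < 8 * B / eps) by (apply Rdiv_lt_0_compat; lra). lra. }
  assert (HLpos : 8 * B / eps < L) by lra.
  assert (HL1 : 1 <= L).
  { unfold L, Lz. rewrite <- INR_IZR_INZ. pose proof (lt_O_fact M).
    replace 1 with (INR 1) by reflexivity. apply le_INR. lia. }
  assert (HLz : (1 <= Lz)%Z) by (apply le_IZR; exact HL1).
  set (g := fun n => (f (INR n / (2 * A)) + B) / (4 * B)).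
  set (qz := fun n : nat => (1 + (Z.of_nat n + 1) * Lz)%Z).
  set (rho := fun n : nat => Int_part (g n * IZR (qz n))).
  destruct (crt qz rho (2 * Na)) as [pz [Hpz Hcong]].
  { intros n. unfold qz. nia. }
  { intros n m Hn Hm Hnm. unfold qz. apply (godel_coprime Lz (Z.of_nat (2 * Na))); try lia.
    intros dd Hdd. unfold Lz. apply fact_div. unfold M. lia. }
  set (p := IZR pz).
  exists (net_eval (netL A L p) (wout B) (-B)). split.
  { exists (netL A L p), (wout B), (-B). split; [simpl; lia|]. split; [|reflexivity].
    repeat constructor; simpl; lia. }
  intros x Hx. rewrite net_eval_eq.
  set (Fx := (f x + B) / (4 * B)).
  assert (Happ : Rabs (outF A L p x - Fx) < 1/L + eps / (8 * B)).
  { apply approx with (g := g); auto.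
    - unfold p. apply IZR_le. auto.
    - apply Rlt_le, Rdiv_lt_0_compat; lra.
    - intros n Hn.
      assert (HnN : (n <= 2 * Na)%nat).
      { apply INR_le. rewrite mult_INR. simpl. fold A. lra. }
      pose proof (HBb n HnN) as Hfb. simpl in Hfb. apply abs_le_bt in Hfb.
      assert (Hg : 0 <= g n <= 1/2).
      { unfold g. split. apply Rmult_le_pos; [lra|]. apply Rlt_le, Rinv_0_lt_compat; lra.
        apply (Rmult_le_reg_r (4 * B)); [lra|]. unfold Rdiv. rewrite Rmult_assoc, Rinv_l by lra. lra. }
      assert (Hq : L * (INR n + 1) + 1 = IZR (qz n)).
      { unfold qz. rewrite plus_IZR, mult_IZR, plus_IZR, <- INR_IZR_INZ. fold L. simpl. ring. }
      assert (Hqpos : L + 1 <= IZR (qz n)).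
      { rewrite <- Hq. pose proof (pos_INR n). nra. }
      destruct (base_Int_part (g n * IZR (qz n))) as [Hr1 Hr2]. fold (rho n) in Hr1, Hr2.
      assert (Hr0 : (0 <= rho n)%Z).
      { assert (-1 < rho n)%Z; [|lia]. apply lt_IZR. simpl.
        assert (0 <= g n * IZR (qz n)) by (apply Rmult_le_pos; lra). lra. }
      apply IZR_le in Hr0.
      destruct (Hcong n HnN) as [m Hm].
      rewrite Hq. unfold p.
      rewrite (T_cong pz (rho n) (qz n) m).
      2:{ apply lt_IZR. lra. }
      2:{ lia. }
      2:{ split. apply Rmult_le_pos; [lra|]. apply Rlt_le, Rinv_0_lt_compat; lra.
          apply (Rmult_le_reg_r (IZR (qz n))); [lra|]. unfold Rdiv. rewrite Rmult_assoc, Rinv_l by lra.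
          nra. }
      split; [lra|]. split.
      + assert (H1q : 1 / IZR (qz n) <= 1 / L).
        { apply Rmult_le_compat_l; [lra|]. apply Rinv_le_contravar; lra. }
        assert (g n - 1 / IZR (qz n) <= 2 * IZR (rho n) / IZR (qz n) / 2); [|lra].
        replace (2 * IZR (rho n) / IZR (qz n) / 2) with (IZR (rho n) / IZR (qz n)) by (field; lra).
        apply (Rmult_le_reg_r (IZR (qz n))); [lra|].
        replace ((g n - 1 / IZR (qz n)) * IZR (qz n)) with (g n * IZR (qz n) - 1) by (field; lra).
        replace (IZR (rho n) / IZR (qz n) * IZR (qz n)) with (IZR (rho n)) by (field; lra). lra.
      + replace (2 * IZR (rho n) / IZR (qz n) / 2) with (IZR (rho n) / IZR (qz n)) by (field; lra).
        apply (Rmult_le_reg_r (IZR (qz n))); [lra|].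
        replace (IZR (rho n) / IZR (qz n) * IZR (qz n)) with (IZR (rho n)) by (field; lra). lra.
    - intros n Hn Hax.
      assert (Hxn : Rabs (INR n / (2 * A) - x) < d).
      { apply abs_lt_bt in Hax. apply Rabs_def1.
        - apply (Rmult_lt_reg_l (2 * A)); [lra|].
          replace (2 * A * (INR n / (2 * A) - x)) with (INR n - 2 * (A * x)) by (field; lra).
          assert (1 / d < A) by lra.
          assert (1 < A * d) by (apply (Rmult_lt_reg_r (/ d)); [apply Rinv_0_lt_compat; lra|];
                                 rewrite Rmult_assoc, Rinv_r by lra; lra).
          nra.
        - apply (Rmult_lt_reg_l (2 * A)); [lra|].
          replace (2 * A * (INR n / (2 * A) - x)) with (INR n - 2 * (A * x)) by (field; lra).
          assert (1 < A * d) by (apply (Rmult_lt_reg_r (/ d)); [apply Rinv_0_lt_compat; lra|];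
                                 rewrite Rmult_assoc, Rinv_r by lra; lra).
          nra. }
      assert (Hxn1 : 0 <= INR n / (2 * A) <= 1).
      { split. apply Rmult_le_pos; [apply pos_INR|]. apply Rlt_le, Rinv_0_lt_compat; lra.
        apply (Rmult_le_reg_r (2 * A)); [lra|]. unfold Rdiv. rewrite Rmult_assoc, Rinv_l by lra. lra. }
      assert (Hx1 : 0 <= x <= 1) by lra.
      pose proof (Hu _ _ Hxn1 Hx1 Hxn) as Hf1.
      unfold g, Fx.
      replace ((f (INR n / (2 * A)) + B) / (4 * B) - (f x + B) / (4 * B))
        with ((f (INR n / (2 * A)) - f x) * / (4 * B)) by (field; lra).
      rewrite Rabs_mult, (Rabs_right (/ (4 * B))) by (apply Rle_ge, Rlt_le, Rinv_0_lt_compat; lra).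
      apply (Rmult_lt_reg_r (4 * B)); [lra|]. rewrite Rmult_assoc, Rinv_l by lra.
      replace (eps / (8 * B) * (4 * B)) with (eps / 2) by (field; lra). lra. }
  assert (H1L : 1 / L < eps / (8 * B)).
  { apply (Rmult_lt_reg_r L); [lra|].
    replace (1 / L * L) with 1 by (field; lra).
    apply (Rmult_lt_reg_l (8 * B / eps)). apply Rdiv_lt_0_compat; lra.
    replace (8 * B / eps * (eps / (8 * B) * L)) with L by (field; lra).
    rewrite Rmult_1_r. lra. }
  replace (4 * B * outF A L p x - B - f x) with (4 * B * (outF A L p x - Fx)) by (unfold Fx; field; lra).
  rewrite Rabs_mult, (Rabs_right (4 * B)) by lra.
  replace eps with (4 * B * (eps / (4 * B))) by (field; lra).
  apply Rmult_lt_compat_l; [lra|].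
  replace (eps / (4 * B)) with (eps / (8 * B) + eps / (8 * B)) by (field; lra). lra.
Qed.
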